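(* Let $\mathcal V=(0,1/16)^2$ and let $\mathcal K$ be the set of $(p,q)\in\mathcal V$ for which $K_{pq}$ is a twofold Cantor set. Then $\mathcal K$ has full two-dimensional Lebesgue measure in $\mathcal V$, and its complement $\mathcal V\setminus\mathcal K$ is uncountable and dense in $\mathcal V$.
   Context: For $p,q\in(0,1/2)$ let $S_1(x)=px$, $S_2(x)=qx$, $S_3(x)=px+1-p$, $S_4(x)=qx+1-q$, let $K_{pq}$ be the attractor of $\{S_1,S_2,S_3,S_4\}$ (the unique nonempty compact $K\subset\mathbb R$ with $K=\bigcup_{i=1}^4S_i(K)$), and let $A=S_3(K_{pq})\cup S_4(K_{pq})$. $K_{pq}$ is called a twofold Cantor set if $S_1^m(A)\cap S_2^n(A)=\varnothing$ for all $m,n\in\mathbb N$. *)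

(* Defs.v *)
From HB Require Import structures.
From mathcomp Require Import all_boot all_order all_algebra.
From mathcomp Require Import all_classical all_reals all_analysis.
Set Implicit Arguments. Unset Strict Implicit. Unset Printing Implicit Defensive.
Import Order.TTheory GRing.Theory Num.Theory.
Import numFieldNormedType.Exports.
Local Open Scope classical_set_scope.
Local Open Scope ring_scope.

Definition S1 {R : realType} (p q x : R) : R := p * x.
Definition S2 {R : realType} (p q x : R) : R := q * x.
Definition S3 {R : realType} (p q x : R) : R := p * x + 1 - p.
Definition S4 {R : realType} (p q x : R) : R := q * x + 1 - q.

(* K is the attractor of {S1,S2,S3,S4}: nonempty compact with K = U S_i(K).
   (Unique by Hutchinson's theorem.) *)
Definition is_attractor {R : realType} (p q : R) (K : set R) : Prop :=
  K !=set0 /\ compact K /\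
  K = (S1 p q @` K) `|` (S2 p q @` K) `|` (S3 p q @` K) `|` (S4 p q @` K).

Definition setA {R : realType} (p q : R) (K : set R) : set R :=
  (S3 p q @` K) `|` (S4 p q @` K).

Definition twofold {R : realType} (p q : R) : Prop :=
  exists K : set R, is_attractor p q K /\
    forall m n : nat, (0 < m)%N -> (0 < n)%N ->
      (iter m (S1 p q) @` setA p q K) `&` (iter n (S2 p q) @` setA p q K) = set0.

Definition calV {R : realType} : set (R * R) :=
  [set pq | 0 < pq.1 < 1/16 /\ 0 < pq.2 < 1/16].

Definition calK {R : realType} : set (R * R) :=
  [set pq | calV pq /\ twofold pq.1 pq.2].

(* Main.v *)
Require Import Defs.
From HB Require Import structures.
From mathcomp Require Import all_boot all_order all_algebra.
From mathcomp Require Import all_classical all_reals all_analysis.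
From mathcomp Require Import ring lra zify measurable_realfun.
Import Order.TTheory GRing.Theory Num.Theory.
Import numFieldNormedType.Exports.
Local Open Scope classical_set_scope.
Local Open Scope ring_scope.
Set Implicit Arguments. Unset Strict Implicit. Unset Printing Implicit Defensive.
Definition slp {R : realType} (p q : R) (i : nat) : R := if odd i then q else p.
Definition trn {R : realType} (p q : R) (i : nat) : R :=
  if (i < 2)%N then 0 else 1 - slp p q i.
Definition Sx {R : realType} (p q : R) (i : nat) (x : R) : R :=
  slp p q i * x + trn p q i.
Fixpoint cc {R : realType} (p q : R) (k n : nat) : R :=
  match k with 0%N => 0 | k'.+1 => Sx p q (n %% 4) (cc p q k' (n %/ 4)) end.
Fixpoint rr {R : realType} (p q : R) (k n : nat) : R :=
  match k with 0%N => 1 | k'.+1 => slp p q (n %% 4) * rr p q k' (n %/ 4) end.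

Lemma slp_bnd {R : realType} (p q : R) i a b :
  a <= p <= b -> a <= q <= b -> a <= slp p q i <= b.
Proof. by rewrite /slp; case: odd. Qed.

Lemma ccrr_bnd {R : realType} (p q : R) k n :
  0 <= p <= 1 -> 0 <= q <= 1 ->
  [/\ 0 <= cc p q k n, 0 <= rr p q k n & cc p q k n + rr p q k n <= 1].
Proof.
move=> hp hq; elim: k n => [|k IH] n /=; first by split; lra.
have [h1 h2 h3] := IH (n %/ 4)%N.
have /andP[s0 s1] := slp_bnd (n %% 4) hp hq.
rewrite /Sx /trn; case: ifP => _; split; try nra.
Qed.
Definition Fs {R : realType} (p q : R) (X : set R) : set R :=
  (S1 p q @` X) `|` (S2 p q @` X) `|` (S3 p q @` X) `|` (S4 p q @` X).
Fixpoint II {R : realType} (p q : R) (k : nat) : set R :=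
  match k with 0%N => `[0, 1]%classic | k'.+1 => Fs p q (II p q k') end.
Definition KK {R : realType} (p q : R) : set R := \bigcap_k II p q k.

Lemma Sx_cover {R : realType} (p q : R) i c r y :
  0 <= slp p q i -> c <= y <= c + r ->
  Sx p q i c <= Sx p q i y <= Sx p q i c + slp p q i * r.
Proof. move=> hs hy; rewrite /Sx; apply/andP; split; nra. Qed.

Lemma S1E {R : realType} (p q x : R) : S1 p q x = Sx p q 0 x.
Proof. by rewrite /S1 /Sx /slp /trn /=; rewrite addr0. Qed.
Lemma S2E {R : realType} (p q x : R) : S2 p q x = Sx p q 1 x.
Proof. by rewrite /S2 /Sx /slp /trn /=; rewrite addr0. Qed.
Lemma S3E {R : realType} (p q x : R) : S3 p q x = Sx p q 2 x.
Proof. rewrite /S3 /Sx /slp /trn /=. by rewrite addrA. Qed.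
Lemma S4E {R : realType} (p q x : R) : S4 p q x = Sx p q 3 x.
Proof. rewrite /S4 /Sx /slp /trn /=. by rewrite addrA. Qed.

Lemma FsE {R : realType} (p q : R) X x :
  Fs p q X x <-> exists2 j, (j < 4)%N & exists2 y, X y & x = Sx p q j y.
Proof.
split.
  rewrite /Fs; move=> [[[[y Xy <-]|[y Xy <-]]|[y Xy <-]]|[y Xy <-]].
  - by exists 0%N => //; exists y => //; rewrite S1E.
  - by exists 1%N => //; exists y => //; rewrite S2E.
  - by exists 2%N => //; exists y => //; rewrite S3E.
  - by exists 3%N => //; exists y => //; rewrite S4E.
case=> j; case: j => [|[|[|[|j]]]] // _ [y Xy ->]; rewrite /Fs.
- by left; left; left; exists y => //; rewrite S1E.
- by left; left; right; exists y => //; rewrite S2E.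
- by left; right; exists y => //; rewrite S3E.
- by right; exists y => //; rewrite S4E.
Qed.

Lemma modn4 (n j : nat) : (j < 4)%N -> ((n * 4 + j) %% 4 = j)%N.
Proof. by move=> hj; rewrite modnMDl modn_small. Qed.
Lemma divn4 (n j : nat) : (j < 4)%N -> ((n * 4 + j) %/ 4 = n)%N.
Proof. by move=> hj; rewrite divnMDl // divn_small // addn0. Qed.

Lemma II_cover {R : realType} (p q : R) k x :
  0 <= p -> 0 <= q -> II p q k x ->
  exists2 n, (n < 4 ^ k)%N & cc p q k n <= x <= cc p q k n + rr p q k n.
Proof.
move=> hp hq; elim: k x => [|k IH] x /=.
  by rewrite /= in_itv /= => hx; exists 0%N => //=; rewrite add0r.
move/FsE=> [j hj [y /IH [n hn hy] ->]].
exists (n * 4 + j)%N.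
  rewrite expnS; apply: (@leq_trans (n * 4 + 4)%N); first by rewrite ltn_add2l.
  by rewrite mulnC -mulnSr leq_mul2l hn orbT.
rewrite modn4 // divn4 //; apply: Sx_cover => //.
by rewrite /slp; case: odd.
Qed.

Lemma Sx01 {R : realType} (p q : R) j y :
  0 <= p <= 1 -> 0 <= q <= 1 -> 0 <= y <= 1 -> 0 <= Sx p q j y <= 1.
Proof.
move=> hp hq hy; have /andP[s0 s1] := slp_bnd j hp hq.
rewrite /Sx /trn; case: ifP => _; apply/andP; split; nra.
Qed.

Lemma II01 {R : realType} (p q : R) k x :
  0 <= p <= 1 -> 0 <= q <= 1 -> II p q k x -> 0 <= x <= 1.
Proof.
move=> hp hq; elim: k x => [|k IH] x /=; first by rewrite in_itv.
by move/FsE=> [j hj [y /IH hy ->]]; apply: Sx01.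
Qed.

Lemma II_decr {R : realType} (p q : R) k :
  0 <= p <= 1 -> 0 <= q <= 1 -> II p q k.+1 `<=` II p q k.
Proof.
move=> hp hq; elim: k => [|k IH] x.
  move=> /(II01 hp hq) hx /=; by rewrite in_itv.
move/FsE=> [j hj [y /IH hy ->]]; apply/FsE; exists j => //; by exists y.
Qed.

Lemma II_le {R : realType} (p q : R) k l :
  0 <= p <= 1 -> 0 <= q <= 1 -> (k <= l)%N -> II p q l `<=` II p q k.
Proof.
move=> hp hq /subnK <-; elim: (l - k)%N => [|d IH] //= x.
by move/(II_decr hp hq)/IH.
Qed.

Lemma II0 {R : realType} (p q : R) k : II p q k 0.
Proof.
elim: k => [|k IH] /=; first by rewrite in_itv /= lexx ler01.
apply/FsE; exists 0%N => //; exists 0 => //; by rewrite /Sx mulr0 add0r /trn.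
Qed.
Lemma Sx_cont {R : realType} (p q : R) j : continuous (Sx p q j).
Proof.
move=> z; rewrite /Sx.
apply: continuousD; last exact: cst_continuous.
apply: continuousM; [exact: cst_continuous | exact: cvg_id].
Qed.

Lemma SfE {R : realType} (p q : R) :
  [/\ S1 p q = Sx p q 0, S2 p q = Sx p q 1, S3 p q = Sx p q 2 & S4 p q = Sx p q 3].
Proof.
by split; apply/funext => y; rewrite ?S1E ?S2E ?S3E ?S4E.
Qed.

Lemma II_compact {R : realType} (p q : R) k : compact (II p q k).
Proof.
elim: k => [|k IH] /=; first exact: segment_compact.
have cS j : compact (Sx p q j @` II p q k).
  by apply: continuous_compact => //; apply: continuous_subspaceT => x; apply: Sx_cont.
rewrite /Fs; have [-> -> -> ->] := SfE p q.
by apply: compactU; [apply: compactU; [apply: compactU|]|].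
Qed.

Lemma le4 (a b c d : nat) :
  [/\ (a <= a + b + c + d)%N, (b <= a + b + c + d)%N, (c <= a + b + c + d)%N & (d <= a + b + c + d)%N].
Proof. split; lia. Qed.

Lemma KK_attr {R : realType} (p q : R) :
  0 < p < 1 -> 0 < q < 1 -> is_attractor p q (KK p q).
Proof.
move=> hp hq.
have hp' : 0 <= p <= 1 by lra.
have hq' : 0 <= q <= 1 by lra.
split; first by exists 0 => k _; exact: II0.
split.
  apply: (@subclosed_compact _ _ (II p q 0)).
  - apply: closed_bigI => k _; apply: compact_closed; first exact: Rhausdorff.
    exact: II_compact.
  - exact: II_compact.
  - by move=> x; apply; rewrite /=.
rewrite -/(Fs p q (KK p q)); apply/seteqP; split => x; last first.
  move/FsE=> [j hj [y Ky ->]] k _.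
  apply: (@II_decr _ p q k hp' hq'); rewrite /=; apply/FsE.
  by exists j => //; exists y => //; apply: Ky.
move=> Kx; apply: contrapT => nF.
have H j : (j < 4)%N -> exists kj, forall y, x = Sx p q j y -> ~ II p q kj y.
  move=> hj; apply: contrapT => /forallNP H.
  apply: nF; apply/FsE; exists j => //.
  have hs : 0 < slp p q j by rewrite /slp; case: odd; lra.
  pose y := (x - trn p q j) / slp p q j.
  have xE : x = Sx p q j y by rewrite /Sx /y mulrC divfK ?gt_eqF //; ring.
  exists y => //; move=> k _.
  have := H k; move/existsNP => [z /not_implyP [zE zz]].
  apply: contrapT => ny; apply: zz.
  suff -> : z = y by [].
  have : slp p q j * z = slp p q j * y by move: zE; rewrite xE /Sx => /addIr.
  by move/mulfI; apply; rewrite gt_eqF.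
have [k0 H0] := H 0%N isT.
have [k1 H1] := H 1%N isT.
have [k2 H2] := H 2%N isT.
have [k3 H3] := H 3%N isT.
have := Kx (k0 + k1 + k2 + k3).+1%N I; rewrite /= => /FsE [j hj [y Iy xE]].
move: j hj xE; case=> [|[|[|[|j]]]] // _ xE.
- by apply: (H0 y xE); apply: (II_le hp' hq' _ Iy); case: (le4 k0 k1 k2 k3).
- by apply: (H1 y xE); apply: (II_le hp' hq' _ Iy); case: (le4 k0 k1 k2 k3).
- by apply: (H2 y xE); apply: (II_le hp' hq' _ Iy); case: (le4 k0 k1 k2 k3).
- by apply: (H3 y xE); apply: (II_le hp' hq' _ Iy); case: (le4 k0 k1 k2 k3).
Qed.
Lemma A_cover {R : realType} (p q : R) a k :
  0 < p < 1 -> 0 < q < 1 -> setA p q (KK p q) a ->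
  exists2 n, (n < 4 ^ k.+1)%N /\ (2 <= n %% 4)%N &
     cc p q k.+1 n <= a <= cc p q k.+1 n + rr p q k.+1 n.
Proof.
move=> hp hq hA.
have [j [hj1 hj2] [y Ky aE]] : exists2 j, (2 <= j)%N /\ (j < 4)%N &
    exists2 y, KK p q y & a = Sx p q j y.
  case: hA => [[y Ky <-]|[y Ky <-]].
  - by exists 2%N => //; exists y => //; rewrite S3E.
  - by exists 3%N => //; exists y => //; rewrite S4E.
have [n hn hy] := II_cover (ltW (proj1 (andP hp))) (ltW (proj1 (andP hq))) (Ky k I).
exists (n * 4 + j)%N.
  split; last by rewrite modn4.
  rewrite expnS; apply: (@leq_trans (n * 4 + 4)%N); first by rewrite ltn_add2l.
  by rewrite mulnC -mulnSr leq_mul2l hn orbT.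
rewrite /= modn4 // divn4 // aE; apply: Sx_cover => //.
by rewrite /slp; case: odd; lra.
Qed.

Lemma iterS1 {R : realType} (p q x : R) m : iter m (S1 p q) x = p ^+ m * x.
Proof. by elim: m => [|m IH] /=; rewrite ?expr0 ?mul1r // IH /S1 exprS mulrA. Qed.
Lemma iterS2 {R : realType} (p q x : R) m : iter m (S2 p q) x = q ^+ m * x.
Proof. by elim: m => [|m IH] /=; rewrite ?expr0 ?mul1r // IH /S2 exprS mulrA. Qed.

Definition Cnd {R : realType} (p q : R) (m n k n1 n2 : nat) : Prop :=
 [/\ (n1 < 4 ^ k.+1)%N && (2 <= n1 %% 4)%N, (n2 < 4 ^ k.+1)%N && (2 <= n2 %% 4)%N,
   p ^+ m * cc p q k.+1 n1 <= q ^+ n * (cc p q k.+1 n2 + rr p q k.+1 n2) &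
   q ^+ n * cc p q k.+1 n2 <= p ^+ m * (cc p q k.+1 n1 + rr p q k.+1 n1)].

Definition Uk {R : realType} (m n k : nat) : set (R * R) :=
  [set pq | calV pq /\ exists n1 n2, Cnd pq.1 pq.2 m n k n1 n2].

Definition NN {R : realType} : set (R * R) :=
  \bigcup_m \bigcup_n \bigcap_k Uk m.+1 n.+1 k.

Lemma bad_NN {R : realType} : calV `\` calK `<=` (@NN R).
Proof.
move=> [p q] [hV hK].
have hV' := hV; case: hV' => /= /andP [p0 p1] /andP [q0 q1].
have hp : 0 < p < 1 by apply/andP; split => //; lra.
have hq : 0 < q < 1 by apply/andP; split => //; lra.
have : ~ forall m n : nat, (0 < m)%N -> (0 < n)%N ->
      (iter m (S1 p q) @` setA p q (KK p q)) `&` (iter n (S2 p q) @` setA p q (KK p q)) = set0.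
  by move=> H; apply: hK; split => //; exists (KK p q); split => //; exact: KK_attr.
move/existsNP => [m /existsNP [n /not_implyP [hm /not_implyP [hn /eqP/set0P [z [[a Aa za] [b Ab zb]]]]]]].
exists m.-1 => //; exists n.-1 => //; move=> k _.
rewrite !prednK //.
split => //.
have [n1 [hn1 hn1'] ha] := A_cover k hp hq Aa.
have [n2 [hn2 hn2'] hb] := A_cover k hp hq Ab.
exists n1, n2; split => //=; try by apply/andP.
- move: za zb; rewrite iterS1 iterS2 => za zb.
  have := ha => /andP [ha1 ha2]; have := hb => /andP [hb1 hb2].
  have pm : 0 <= p ^+ m by rewrite exprn_ge0 // ltW.
  have qn : 0 <= q ^+ n by rewrite exprn_ge0 // ltW.
  rewrite (le_trans (ler_wpM2l pm ha1)) // za -zb.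
  exact: ler_wpM2l.
- move: za zb; rewrite iterS1 iterS2 => za zb.
  have := ha => /andP [ha1 ha2]; have := hb => /andP [hb1 hb2].
  have pm : 0 <= p ^+ m by rewrite exprn_ge0 // ltW.
  have qn : 0 <= q ^+ n by rewrite exprn_ge0 // ltW.
  rewrite (le_trans (ler_wpM2l qn hb1)) // zb -za.
  exact: ler_wpM2l.
Qed.
Lemma cc_lip {R : realType} (p q1 q2 : R) k n :
  0 <= p <= 1/16 -> 0 <= q1 -> q1 <= q2 -> q2 <= 1/16 ->
  - (2 * (q2 - q1)) <= cc p q2 k n - cc p q1 k n <= 2 * (q2 - q1).
Proof.
move=> hp hq1 h12 hq2; elim: k n => [|k IH] n /=; first by rewrite subrr; lra.
have hp' : 0 <= p <= 1 by lra.
have [a1 _ b1] := @ccrr_bnd _ p q1 k (n %/ 4) hp' ltac:(lra).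
have [a2 _ b2] := @ccrr_bnd _ p q2 k (n %/ 4) hp' ltac:(lra).
have hr1 := rr p q1 k (n %/ 4); have /andP [i1 i2] := IH (n %/ 4)%N.
move: a1 b1 a2 b2 i1 i2.
set c1 := cc p q1 k (n %/ 4); set c2 := cc p q2 k (n %/ 4).
move=> a1 b1 a2 b2 i1 i2.
have [_ r1 _] := @ccrr_bnd _ p q1 k (n %/ 4) hp' ltac:(lra).
have [_ r2 _] := @ccrr_bnd _ p q2 k (n %/ 4) hp' ltac:(lra).
have sb s : 0 <= s <= 1/16 -> - ((q2 - q1) / 8) <= s * (c2 - c1) <= (q2 - q1) / 8.
  move=> /andP [hs1 hs2].
  have f1 : 0 <= s * (c2 - c1 + 2 * (q2 - q1)) by apply: mulr_ge0; lra.
  have f2 : 0 <= s * (2 * (q2 - q1) - (c2 - c1)) by apply: mulr_ge0; lra.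
  have f3 : 0 <= (1/16 - s) * (q2 - q1) by apply: mulr_ge0; lra.
  apply/andP; split; nra.
have /andP [e1 e2] := sb p hp; have /andP [e3 e4] := sb q2 ltac:(lra).
have e5 : 0 <= (q2 - q1) * c1 <= q2 - q1.
  have g1 : 0 <= (q2 - q1) * c1 by apply: mulr_ge0; lra.
  have g2 : 0 <= (q2 - q1) * (1 - c1) by apply: mulr_ge0; lra.
  apply/andP; split; nra.
have e6 : q2 * c2 - q1 * c1 = q2 * (c2 - c1) + (q2 - q1) * c1 by ring.
rewrite /Sx /trn /slp; case: odd; case: ifP => _; apply/andP; split; lra.
Qed.

Lemma rr_mono {R : realType} (p q1 q2 : R) k n :
  0 <= p -> 0 <= q1 -> q1 <= q2 -> 0 <= rr p q1 k n <= rr p q2 k n.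
Proof.
move=> hp hq h12; elim: k n => [|k IH] n /=; first by rewrite ler01 lexx.
have /andP [a b] := IH (n %/ 4)%N.
rewrite /slp; case: odd; apply/andP; split; nra.
Qed.

Lemma ccA_ge {R : realType} (p q : R) k n :
  0 <= p <= 1/16 -> 0 <= q <= 1/16 -> (2 <= n %% 4)%N ->
  15/16 <= cc p q k.+1 n /\ rr p q k.+1 n <= 1/16.
Proof.
move=> hp hq hn /=.
have [a b c] := @ccrr_bnd _ p q k (n %/ 4) ltac:(lra) ltac:(lra).
rewrite /Sx /trn ltnNge hn /=.
by rewrite /slp; case: odd; split; nra.
Qed.

Lemma powdiff {R : realType} (q1 q2 : R) n :
  0 <= q1 -> q1 <= q2 -> q1 ^+ n * (q2 - q1) <= q2 ^+ n.+1 - q1 ^+ n.+1.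
Proof.
move=> h1 h12.
have h : q1 ^+ n <= q2 ^+ n by apply: lerXn2r => //; rewrite ?nnegrE //; lra.
have h0 : 0 <= q1 ^+ n by rewrite exprn_ge0.
rewrite !exprS; nra.
Qed.

Lemma diam {R : realType} (p q1 q2 : R) m n k n1 n2 :
  0 < p < 1/16 -> 0 < q1 -> q1 <= q2 -> q2 < 1/16 ->
  Cnd p q1 m n.+1 k n1 n2 -> Cnd p q2 m n.+1 k n1 n2 ->
  q2 - q1 <= rr p (1/16) k.+1 n1 + rr p (1/16) k.+1 n2.
Proof.
move=> hp hq1 h12 hq2 [/andP[_ i1] /andP[_ i2] H1 _] [_ _ _ H2].
have hp' : 0 <= p <= 1/16 by lra.
have [A1g _] := @ccA_ge _ p q1 k n1 hp' ltac:(lra) i1.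
have [B2g _] := @ccA_ge _ p q2 k n2 hp' ltac:(lra) i2.
have [_ br1 B1b] := @ccrr_bnd _ p q1 k.+1 n2 ltac:(lra) ltac:(lra).
have [_ ar2 A2b] := @ccrr_bnd _ p q2 k.+1 n1 ltac:(lra) ltac:(lra).
have /andP [_ ar2R] := @rr_mono _ p q2 (1/16) k.+1 n1 ltac:(lra) ltac:(lra) ltac:(lra).
have /andP [_ br1R] := @rr_mono _ p q1 (1/16) k.+1 n2 ltac:(lra) ltac:(lra) ltac:(lra).
have /andP [lA1 lA2] := @cc_lip _ p q1 q2 k.+1 n1 hp' ltac:(lra) h12 ltac:(lra).
have /andP [lB1 lB2] := @cc_lip _ p q1 q2 k.+1 n2 hp' ltac:(lra) h12 ltac:(lra).
have hpd := powdiff n (ltW hq1) h12.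
move: H1 H2 A1g B2g br1 B1b ar2 A2b ar2R br1R lA1 lA2 lB1 lB2 hpd.
set A1 := cc p q1 k.+1 n1; set A2 := cc p q2 k.+1 n1.
set B1 := cc p q1 k.+1 n2; set B2 := cc p q2 k.+1 n2.
set a2 := rr p q2 k.+1 n1; set b1 := rr p q1 k.+1 n2.
set R1 := rr p (1/16) k.+1 n1; set R2 := rr p (1/16) k.+1 n2.
set P := p ^+ m; set Qm := q1 ^+ n.
have -> : q1 ^+ n.+1 = q1 * Qm by rewrite exprS.
set Q2 := q2 ^+ n.+1.
move=> H1 H2 A1g B2g br1 B1b ar2 A2b ar2R br1R lA1 lA2 lB1 lB2 hpd.
have P0 : 0 < P by rewrite exprn_gt0 //; lra.
have Qm0 : 0 < Qm by rewrite exprn_gt0.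
set D := q2 - q1.
have D0 : 0 <= D by rewrite /D; lra.
have e1 : P <= 16/15 * (q1 * Qm).
  have f1 : P * (15/16) <= P * A1 by apply: ler_wpM2l; lra.
  have f2 : q1 * Qm * (B1 + b1) <= q1 * Qm by have := mulr_ge0 (ltW hq1) (ltW Qm0); nra.
  lra.
have up : Q2 * B2 - P * A2 - (q1 * Qm * B1 - P * A1) <= 16/15 * (q1 * Qm) * (R1 + R2).
  have f1 : P * a2 <= P * R1 by apply: ler_wpM2l; lra.
  have f2 : q1 * Qm * b1 <= q1 * Qm * R2 by apply: ler_wpM2l => //; nra.
  have f3 : P * R1 <= 16/15 * (q1 * Qm) * R1.
    by apply: ler_wpM2r => //; have [] := @ccrr_bnd _ p (1/16) k.+1 n1 ltac:(lra) ltac:(lra).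
  have f4 : 0 <= q1 * Qm * R2.
    have [] := @ccrr_bnd _ p (1/16) k.+1 n2 ltac:(lra) ltac:(lra) => _ h _.
    by apply: mulr_ge0 => //; nra.
  nra.
have low : Qm * D * (15/16) - 2 * (q1 * Qm) * D - 2 * P * D <=
    Q2 * B2 - P * A2 - (q1 * Qm * B1 - P * A1).
  have eq : Q2 * B2 - P * A2 - (q1 * Qm * B1 - P * A1) =
     (Q2 - q1 * Qm) * B2 + q1 * Qm * (B2 - B1) - P * (A2 - A1) by ring.
  rewrite eq.
  have g1 : Qm * D * (15/16) <= (Q2 - q1 * Qm) * B2.
    have : Qm * D <= Q2 - q1 * Qm by [].
    have : 0 <= Qm * D by apply: mulr_ge0 => //; lra.
    nra.
  have g2 : - (2 * (q1 * Qm) * D) <= q1 * Qm * (B2 - B1).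
    have hq : 0 <= q1 * Qm by apply: mulr_ge0; lra.
    have : q1 * Qm * (B2 - B1 + 2 * D) >= 0 by apply: mulr_ge0 => //; rewrite /D; lra.
    nra.
  have g3 : P * (A2 - A1) <= 2 * P * D.
    have : P * (2 * D - (A2 - A1)) >= 0 by apply: mulr_ge0; rewrite /D; lra.
    nra.
  lra.
have main : Qm * D * (15/16) - 2 * (q1 * Qm) * D - 2 * P * D <= 16/15 * (q1 * Qm) * (R1 + R2).
  exact: le_trans low up.
have hPD : P * D <= 16/15 * (q1 * Qm) * D by apply: ler_wpM2r.
have hR : 0 <= R1 + R2.
  have [] := @ccrr_bnd _ p (1/16) k.+1 n1 ltac:(lra) ltac:(lra) => _ h _.
  have [] := @ccrr_bnd _ p (1/16) k.+1 n2 ltac:(lra) ltac:(lra) => _ h' _.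
  lra.
have main2 : Qm * (D * (15/16 - 62/15 * q1)) <= Qm * (16/15 * q1 * (R1 + R2)).
  nra.
have main3 : D * (15/16 - 62/15 * q1) <= 16/15 * q1 * (R1 + R2).
  by rewrite -(ler_pM2l Qm0).
have h4 : 16/15 * q1 * (R1 + R2) <= 1/15 * (R1 + R2) by nra.
have h5 : D * (163/240) <= D * (15/16 - 62/15 * q1) by nra.
lra.
Qed.
Notation TT R := (measurableTypeR R * measurableTypeR R)%type.

Lemma mfst {R : realType} : measurable_fun [set: TT R] (fun pq : TT R => (pq.1 : R)).
Proof. exact: measurable_fst. Qed.
Lemma msnd {R : realType} : measurable_fun [set: TT R] (fun pq : TT R => (pq.2 : R)).
Proof. exact: measurable_snd. Qed.

Lemma mle {R : realType} (f g : TT R -> R) :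
  measurable_fun setT f -> measurable_fun setT g -> measurable [set x | f x <= g x].
Proof.
move=> mf mg.
have H := measurable_funB mg mf measurableT (@measurable_itv _ `[0, +oo[%R).
rewrite setTI in H.
suff -> : [set x | f x <= g x] = (g \- f) @^-1` `[0, +oo[%classic by [].
by apply/seteqP; split => x /=; rewrite in_itv /= andbT subr_ge0.
Qed.

Lemma mlt {R : realType} (f g : TT R -> R) :
  measurable_fun setT f -> measurable_fun setT g -> measurable [set x | f x < g x].
Proof.
move=> mf mg.
have H := measurable_funB mg mf measurableT (@measurable_itv _ `]0, +oo[%R).
rewrite setTI in H.
suff -> : [set x | f x < g x] = (g \- f) @^-1` `]0, +oo[%classic by [].
by apply/seteqP; split => x /=; rewrite in_itv /= andbT subr_gt0.
Qed.

Lemma mslp {R : realType} i :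
  measurable_fun [set: TT R] (fun pq : TT R => slp (pq.1 : R) (pq.2 : R) i).
Proof. by rewrite /slp; case: (odd i); [exact: msnd | exact: mfst]. Qed.

Lemma mtrn {R : realType} i :
  measurable_fun [set: TT R] (fun pq : TT R => trn (pq.1 : R) (pq.2 : R) i).
Proof.
rewrite /trn; case: (i < 2)%N; first exact: measurable_cst.
by apply: measurable_funB; [exact: measurable_cst | exact: mslp].
Qed.

Lemma mcc {R : realType} k n :
  measurable_fun [set: TT R] (fun pq : TT R => cc (pq.1 : R) (pq.2 : R) k n).
Proof.
elim: k n => [|k IH] n /=; first exact: measurable_cst.
rewrite /Sx; apply: measurable_funD; last exact: mtrn.
by apply: measurable_funM; [exact: mslp | exact: IH].
Qed.

Lemma mrr {R : realType} k n :
  measurable_fun [set: TT R] (fun pq : TT R => rr (pq.1 : R) (pq.2 : R) k n).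
Proof.
elim: k n => [|k IH] n /=; first exact: measurable_cst.
by apply: measurable_funM; [exact: mslp | exact: IH].
Qed.

Lemma mcalV {R : realType} : measurable (calV : set (TT R)).
Proof.
have -> : (calV : set (TT R)) = [set x : TT R | 0 < (x.1 : R)] `&` [set x : TT R | (x.1 : R) < 1/16]
   `&` ([set x : TT R | 0 < (x.2 : R)] `&` [set x : TT R | (x.2 : R) < 1/16]).
  by apply/seteqP; split => x; rewrite /calV /=; [move=> [/andP[? ?] /andP[? ?]] | move=> [[? ?] [? ?]]]; 
     split => //; apply/andP; split.
apply: measurableI; apply: measurableI; apply: mlt;
  solve [exact: measurable_cst | exact: mfst | exact: msnd].
Qed.

Lemma mUk {R : realType} m n k : measurable (Uk m n k : set (TT R)).
Proof.
have -> : (Uk m n k : set (TT R)) = calV `&` \bigcup_n1 \bigcup_n2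
    [set x : TT R | Cnd (x.1 : R) (x.2 : R) m n k n1 n2].
  apply/seteqP; split => x /=.
    by move=> [hV [n1 [n2 h]]]; split => //; exists n1 => //; exists n2.
  by move=> [hV [n1 _ [n2 _ h]]]; split => //; exists n1, n2.
apply: measurableI; first exact: mcalV.
apply: bigcupT_measurable => n1; apply: bigcupT_measurable => n2.
set b1 := ((n1 < 4 ^ k.+1)%N && (2 <= n1 %% 4)%N).
set b2 := ((n2 < 4 ^ k.+1)%N && (2 <= n2 %% 4)%N).
have mb (b : bool) : measurable [set _ : TT R | b].
  case: b; first by rewrite (_ : [set _ : TT R | true] = setT) //; apply/seteqP; split.
  by rewrite (_ : [set _ : TT R | false] = set0) //; apply/seteqP; split.
have -> : [set x : TT R | Cnd (x.1 : R) (x.2 : R) m n k n1 n2] =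
   ([set _ : TT R | b1] `&` [set _ : TT R | b2]) `&`
   ([set x : TT R | (x.1 : R) ^+ m * cc (x.1 : R) (x.2 : R) k.+1 n1 <=
        (x.2 : R) ^+ n * (cc (x.1 : R) (x.2 : R) k.+1 n2 + rr (x.1 : R) (x.2 : R) k.+1 n2)] `&`
    [set x : TT R | (x.2 : R) ^+ n * cc (x.1 : R) (x.2 : R) k.+1 n2 <=
        (x.1 : R) ^+ m * (cc (x.1 : R) (x.2 : R) k.+1 n1 + rr (x.1 : R) (x.2 : R) k.+1 n1)]).
  apply/seteqP; split => x /=; first by move=> [? ? ? ?].
  by move=> [[? ?] [? ?]]; split.
apply: measurableI; first by apply: measurableI; apply: mb.
have mX1 j : measurable_fun [set: TT R] (fun x : TT R => (x.1 : R) ^+ j).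
  by apply: measurable_funX; exact: mfst.
have mX2 j : measurable_fun [set: TT R] (fun x : TT R => (x.2 : R) ^+ j).
  by apply: measurable_funX; exact: msnd.
apply: measurableI; apply: mle; apply: measurable_funM.
- exact: mX1.
- exact: mcc.
- exact: mX2.
- apply: measurable_funD; [exact: mcc | exact: mrr].
- exact: mX2.
- exact: mcc.
- exact: mX1.
- apply: measurable_funD; [exact: mcc | exact: mrr].
Qed.
Lemma sum_split4 {R : realType} (f : nat -> R) M :
  \sum_(0 <= n < M * 4) f n = \sum_(0 <= a < M) \sum_(0 <= b < 4) f (a * 4 + b)%N.
Proof.
elim: M => [|M IH]; first by rewrite mul0n !big_geq.
rewrite (@big_cat_nat _ _ _ (M * 4)) //=; last by rewrite leq_pmul2r // leqnSn.
rewrite [RHS]big_nat_recr //= IH; congr (_ + _).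
rewrite mulSn addnC -{1}(add0n (M * 4)%N) big_addn.
have -> : (M * 4 + 4 - M * 4 = 4)%N by rewrite addKn.
by apply: eq_bigr => b _; rewrite addnC.
Qed.

Lemma sum_rr {R : realType} (p q : R) k :
  \sum_(0 <= n < 4 ^ k) rr p q k n = (2 * p + 2 * q) ^+ k.
Proof.
elim: k => [|k IH]; first by rewrite expn0 big_nat1 expr0.
rewrite expnS mulnC sum_split4 exprSr -IH big_distrl /=.
apply: eq_bigr => a _.
rewrite !big_nat_recr //= big_geq // add0r !modn4 // !divn4 // /slp /=.
ring.
Qed.

Lemma leb_itv {R : realType} (c d : R) : 0 <= d ->
  (lebesgue_measure (`[(c - d)%R, (c + d)%R]%classic : set R) <= ((2 * d)%R)%:E)%E.
Proof.
move=> hd; rewrite lebesgue_measure_itv /=.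
case: ifP => _; last by rewrite lee_fin; lra.
by rewrite -EFinB lee_fin; lra.
Qed.
Lemma sec_bound {R : realType} (p : R) m n k : 0 < p < 1/16 ->
  (lebesgue_measure (xsection (Uk m n.+1 k : set (TT R)) p) <=
     ((4 * (8 * p + 1/2) ^+ k.+1)%R)%:E)%E.
Proof.
move=> hp.
set N := (4 ^ k.+1)%N.
pose Rf n0 := rr p (1/16 : R) k.+1 n0.
have Rf0 n0 : 0 <= Rf n0.
  by have [] := @ccrr_bnd _ p (1/16 : R) k.+1 n0 ltac:(lra) ltac:(lra).
pose J n1 n2 : set R := [set q | calV (p, q) /\ Cnd p q m n.+1 k n1 n2].
pose I n1 n2 : set R := `[(xget 0 (J n1 n2) - (Rf n1 + Rf n2))%R,
                          (xget 0 (J n1 n2) + (Rf n1 + Rf n2))%R]%classic.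
pose F n1 : set R := \big[setU/set0]_(n2 < N) I n1 n2.
have mF n1 : measurable (F n1).
  by apply: bigsetU_measurable => n2 _; exact: measurable_itv.
have sub : xsection (Uk m n.+1 k : set (TT R)) p `<=` \big[setU/set0]_(n1 < N) F n1.
  move=> q; rewrite /xsection /= inE => -[hV [n1 [n2 hC]]].
  have Jq : J n1 n2 q by split.
  have /(xgetPex 0) Jc : exists x, J n1 n2 x by exists q.
  set c := xget 0 (J n1 n2) in Jc *.
  have [[_ /= /andP [q0 q1]] _] := (Jq : J n1 n2 q).
  have [[_ /= /andP [c0 c1]] hCc] := Jc.
  have [/andP [hn1 _] /andP [hn2 _] _ _] := hC.
  rewrite -bigcup_mkord; exists n1 => //.
  rewrite /F -bigcup_mkord; exists n2 => //.
  rewrite /I /= in_itv /= -/c; apply/andP.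
  case: (leP q c) => hqc.
    have := diam hp q0 hqc c1 hC hCc; rewrite /Rf /= => h.
    split; lra.
  have := diam hp c0 (ltW hqc) q1 hCc hC; rewrite /Rf /= => h.
  split; lra.
have mS : measurable (xsection (Uk m n.+1 k : set (TT R)) p).
  by apply: measurable_xsection; exact: mUk.
apply: (le_trans (content_subadditive lebesgue_measure (fun n1 _ => mF n1) mS sub)).
apply: (@le_trans _ _ (\sum_(n1 < N) \sum_(n2 < N) ((2 * (Rf n1 + Rf n2))%R)%:E)%E).
  apply: lee_sum => n1 _.
  apply: (le_trans (@content_subadditive _ _ _ lebesgue_measure _ (I n1) N
      (fun n2 _ => measurable_itv _) (mF n1) (fun x h => h))).
  apply: lee_sum => n2 _; apply: leb_itv.
  by have := Rf0 n1; have := Rf0 n2; lra.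
under eq_bigr do rewrite sumEFin.
rewrite sumEFin lee_fin.
have S : \sum_(n0 < N) Rf n0 = (2 * p + 2 * (1/16)) ^+ k.+1.
  by rewrite -(@big_mkord _ _ _ N xpredT Rf) sum_rr.
set X := (2 * p + 2 * (1/16)) ^+ k.+1 in S.
have E2 n1 : \sum_(n2 < N) (2 * (Rf n1 + Rf n2)) = 2 * (Rf n1 *+ N) + 2 * X.
  by rewrite -mulr_sumr big_split /= sumr_const card_ord S mulrDr.
under eq_bigr do rewrite E2.
rewrite big_split /= -!mulr_sumr sumr_const card_ord.
have -> : \sum_(i < N) Rf i *+ N = X *+ N by rewrite sumrMnl S.
have NX : X *+ N = (8 * p + 1/2) ^+ k.+1.
  rewrite -mulr_natl /N natrX -exprMn; congr (_ ^+ _); lra.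
rewrite NX; lra.
Qed.
Lemma geo_small {R : realType} (z e : R) : 0 <= z < 1 -> 0 < e -> exists N : nat, z ^+ N < e.
Proof.
move=> /andP [z0 z1] he.
have hz : `|z| < 1 by rewrite ger0_norm.
have nb : nbhs (0 : R) [set x : R | `|x| < e].
  apply/nbhs_ballP; exists e => // y; rewrite /ball /= sub0r normrN //.
have [N _ HN] := @cvg_geometric R 1 z hz _ nb.
exists N; have := HN N (leqnn N); rewrite /= /geometric /= mul1r.
by rewrite ger0_norm // exprn_ge0.
Qed.

Lemma mNk {R : realType} m n : measurable (\bigcap_k Uk m n k : set (TT R)).
Proof. by apply: bigcapT_measurable => k; exact: mUk. Qed.

Lemma sec0 {R : realType} (p : R) m n :
  lebesgue_measure (xsection (\bigcap_k Uk m n.+1 k : set (TT R)) p) = 0%E.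
Proof.
have mS : measurable (xsection (\bigcap_k Uk m n.+1 k : set (TT R)) p).
  by apply: measurable_xsection; exact: mNk.
case: (pselect (0 < p < 1/16)) => hp; last first.
  rewrite (_ : xsection _ p = set0) ?measure0 //; apply/seteqP; split => // q.
  by rewrite /xsection /= inE => /(_ 0%N I) [[/= hp' _] _].
have H k : (lebesgue_measure (xsection (\bigcap_k Uk m n.+1 k : set (TT R)) p) <=
     ((4 * (8 * p + 1/2) ^+ k.+1)%R)%:E)%E.
  apply: le_trans (sec_bound m n k hp).
  apply: le_measure; rewrite ?inE //.
    by apply: measurable_xsection; exact: mUk.
  by move=> q; rewrite /xsection /= !inE => /(_ k I).
set x := lebesgue_measure _ in H *.
have r0 : (0 <= x)%E by apply: measure_ge0.
have xfin : x \is a fin_num.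
  by rewrite ge0_fin_numE //; apply: le_lt_trans (H 0%N) _; rewrite ltey.
rewrite -(fineK xfin); move: r0 H; rewrite -(fineK xfin); set r := fine x.
move=> r0 H; rewrite lee_fin in r0.
congr (_%:E); apply/eqP; rewrite eq_le r0 andbT.
rewrite leNgt; apply/negP => /= rpos.
have /andP [hp0 hp1] := hp.
have hz : 0 <= 8 * p + 1/2 < 1 by apply/andP; split; lra.
have [N hN] := @geo_small _ (8 * p + 1/2) (r / 4) hz ltac:(lra).
have := H N; rewrite lee_fin => h.
have h2 : (8 * p + 1/2) ^+ N.+1 <= (8 * p + 1/2) ^+ N.
  rewrite exprS; have := exprn_ge0 N (_ : 0 <= 8 * p + 1/2); nra.
lra.
Qed.
Lemma part1 {R : realType} :
  ((@lebesgue_measure R) \x (@lebesgue_measure R))%E.-negligible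
     (calV `\` calK).
Proof.
have mN : measurable (NN : set (TT R)).
  by apply: bigcupT_measurable => m; apply: bigcupT_measurable => n; exact: mNk.
exists (NN : set (TT R)); split => //; last exact: bad_NN.
rewrite /product_measure1; apply: integral0_eq => x _ /=.
have : (@lebesgue_measure R).-negligible (xsection (NN : set (TT R)) x).
  apply: (@negligibleS _ _ _ _ (\bigcup_m \bigcup_n
        xsection (\bigcap_k Uk m.+1 n.+1 k : set (TT R)) x)).
    move=> q; rewrite /xsection /NN /= inE => -[m _ [n _ h]].
    by exists m => //; exists n => //; rewrite /= inE.
  apply: negligible_bigcup => m; apply: negligible_bigcup => n.
  exists (xsection (\bigcap_k Uk m.+1 n.+1 k : set (TT R)) x); split => //.
  - by apply: measurable_xsection; exact: mNk.
  - exact: sec0.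
by move/negligibleP => -> //; apply: measurable_xsection.
Qed.

Lemma iterS3 {R : realType} (p q x : R) j :
  iter j (S3 p q) x = 1 - p ^+ j * (1 - x).
Proof.
elim: j => [|j IH] /=; first by rewrite expr0 mul1r; ring.
by rewrite IH /S3 exprS; ring.
Qed.

Lemma one_in_K {R : realType} (p q : R) K :
  0 < p < 1 -> is_attractor p q K -> K 1.
Proof.
move=> /andP [p0 p1] [[x Kx] [cK KE]].
have cl : closed K by apply: compact_closed; [exact: Rhausdorff | exact: cK].
have S3K y : K y -> K (S3 p q y).
  by move=> Ky; rewrite KE; left; right; exists y.
have KK' j : K (iter j (S3 p q) x).
  by elim: j => [|j IH] //=; apply: S3K.
have hz : `|p| < 1 by rewrite ger0_norm ?ltW.
have := cvgB (cvg_cst (1 : R)) (cvg_geometric (1 - x) hz).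
rewrite subr0 => Hc.
have Hc' : (fun j => iter j (S3 p q) x) @ \oo --> (1 : R).
  have -> : (fun j => iter j (S3 p q) x) = (cst 1 \- geometric (1 - x) p).
    by apply/funext => j; rewrite /= iterS3 /geometric /= mulrC.
  exact: Hc.
apply: (closed_cvg K cl _ 1 Hc'); exact: nearW.
Qed.

Lemma bad_point {R : realType} (p q : R) m n :
  0 < p < 1/16 -> 0 < q < 1/16 -> (0 < m)%N -> (0 < n)%N -> p ^+ m = q ^+ n ->
  (calV `\` calK) (p, q).
Proof.
move=> hp hq hm hn e; split; first by split.
move=> [_ [K [hK H]]].
have p01 : 0 < p < 1 by apply/andP; split; lra.
have K1 := one_in_K p01 hK.
have A1 : setA p q K 1.
  by left; exists 1 => //; rewrite /S3; ring.
have := H m n hm hn; apply/eqP/set0P; exists (p ^+ m); split.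
  by exists 1 => //; rewrite iterS1 mulr1.
by exists 1 => //; rewrite iterS2 mulr1.
Qed.
Lemma approxq {R : realType} (p0 q0 e : R) :
  0 < p0 < 1 -> 0 < q0 < 1 -> 0 < e ->
  exists q N j, [/\ 0 < q <= q0, q0 - q < e, (0 < N)%N, (0 < j)%N & p0 ^+ j = q ^+ N].
Proof.
move=> /andP [hp0 hp1] /andP [hq0 hq1] e0.
pose eta := Num.min e (1/2).
have eta0 : 0 < eta by rewrite lt_min e0 /=; lra.
have eta1 : eta <= 1/2 by rewrite ge_min lexx orbT.
have etae : eta <= e by rewrite ge_min lexx.
have [N hN] := @geo_small _ (1 - eta) p0 ltac:(apply/andP; split; lra) hp0.
have N0 : (0 < N)%N by case: N hN => // ; rewrite expr0 => h; lra.
pose y := p0 `^ (N%:R^-1).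
have y0 : 0 < y by apply: powR_gt0.
have yN : y ^+ N = p0.
  rewrite -powR_mulrn ?ltW // /y -powRrM mulVf ?powRr1 ?ltW //.
  by rewrite pnatr_eq0 -lt0n.
have y1 : y < 1.
  rewrite ltNge; apply/negP => hy.
  have : 1 <= y ^+ N by apply: exprn_ege1.
  rewrite yN; lra.
have ye : 1 - eta <= y.
  rewrite leNgt; apply/negP => hy.
  have : y ^+ N <= (1 - eta) ^+ N by apply: lerXn2r; rewrite ?nnegrE; lra.
  rewrite yN; lra.
have hex : exists j, (fun j => y ^+ j <= q0) j.
  have [j hj] := @geo_small _ y q0 ltac:(apply/andP; split; lra) hq0.
  by exists j; rewrite /= ltW.
case: (ex_minnP hex) => j hj hmin.
have j0 : (0 < j)%N.
  by case: j hj hmin => [|j'] // /= h _; rewrite expr0 in h; lra.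
have hj1 : q0 < y ^+ j.-1.
  rewrite ltNge; apply/negP => h.
  by have := hmin _ h; rewrite -{1}(prednK j0) ltnn.
exists (y ^+ j), N, j; split => //.
- by rewrite exprn_gt0.
- have -> : y ^+ j = y * y ^+ j.-1 by rewrite -exprS prednK.
  have : y * q0 < y * y ^+ j.-1 by rewrite ltr_pM2l.
  have : (1 - eta) * q0 <= y * q0 by rewrite ler_pM2r.
  nra.
- by rewrite -yN -!exprM mulnC.
Qed.
Lemma part2 {R : realType} : ~ countable (calV `\` (@calK R)).
Proof.
move=> /countable_injP [f injf].
have cX : countable (`]0, (1/16 : R)[%classic : set R).
  apply/countable_injP; exists (fun x => f (x, x)) => x y hx hy e.
  move: hx hy; rewrite !inE /= !in_itv /= => hx hy.
  have hx' : (calV `\` (@calK R)) (x, x) by apply: (bad_point (m := 1) (n := 1)).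
  have hy' : (calV `\` (@calK R)) (y, y) by apply: (bad_point (m := 1) (n := 1)).
  by have := injf (x, x) (y, y) ltac:(by rewrite inE) ltac:(by rewrite inE) e => -[].
have := countable_lebesgue_measure0 cX; rewrite lebesgue_measure_itv /=.
rewrite lte_fin ifT; last lra.
rewrite oppr0 adde0 => /eqP; rewrite eqe; apply/negP; rewrite gt_eqF //; lra.
Qed.

Lemma part3 {R : realType} : calV `<=` closure (calV `\` (@calK R)).
Proof.
move=> [p0 q0] [/= /andP [hp0 hp1] /andP [hq0 hq1]] B /nbhs_ballP [e e0 sB].
have [q [N [j [/andP [q0' qq] qe N0 j0 E]]]] :=
  @approxq _ p0 q0 e ltac:(apply/andP; split; lra) ltac:(apply/andP; split; lra) e0.
exists (p0, q); split.
  apply: (bad_point (m := j) (n := N)) => //; apply/andP; split; lra.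
apply: sB; split => /=; first exact: ballxx.
rewrite /ball /= ger0_norm; lra.
Qed.

Unset Implicit Arguments.

Theorem theorem19 (R : realType) :
  ((@lebesgue_measure R) \x (@lebesgue_measure R))%E.-negligible
     (calV `\` calK) /\
  ~ countable (calV `\` (@calK R)) /\
  calV `<=` closure (calV `\` (@calK R)).
Proof.
split; first exact: part1.
split; first exact: part2.
exact: part3.
Qed.
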